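(* Let $\Omega$ be a finite set, let $\mathcal K$ be a finite nonempty set of gambles on $\Omega$, and let $\underline{P}_{\mathcal K}$ be a coherent lower prevision on $\mathcal K$. Let $\mathcal M=\{P: P(f)\ge\underline{P}_{\mathcal K}(f)\ \forall f\in\mathcal K\}$ be its credal set, $\operatorname{ext}(\mathcal M)$ its set of extreme points, and $\underline{E}(h)=\min_{P\in\mathcal M}P(h)$ its natural extension. For $f\in\mathcal K$ let $\mathcal M_f=\{P\in\mathcal M: P(f)=\underline{E}(f)\}$ and let $\mathcal E_f$ be the set of extreme points of $\mathcal M_f$. For $E\in\mathcal M$ let $N_{\mathcal M}(E)=\{h: E(h)=\underline{E}(h)\}$, and for linear previsions $E\in\mathcal M$, $F$ define $$d_E(E,F)=\max_{h\in N_{\mathcal M}(E),\,h\neq 0}\frac{F(h)-E(h)}{\|h\|}.$$ Let $\underline{P}$ be any coherent lower prevision on the set of all gambles with $\underline{P}(f)=\underline{P}_{\mathcal K}(f)$ for all $f\in\mathcal K$. Then $$d(\underline{P},\underline{E}):=\max_{\|h\|=1}|\underline{P}(h)-\underline{E}(h)|\le\max_{E\in\operatorname{ext}(\mathcal M)}\ \min_{f\in\mathcal K}\ \max_{F\in\mathcal E_f}d_E(E,F).$$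
   Context: Gambles are real-valued functions on the finite set $\Omega$, identified with vectors in $\mathbb{R}^{\Omega}$, with Euclidean norm $\|h\|=\sqrt{\sum_{x}h(x)^2}$. A linear prevision is the expectation functional $P(f)=\sum_{x}p(x)f(x)$ of a probability mass vector $p$. A lower prevision $\underline{P}$ on a set of gambles $\mathcal H$ is coherent if there is a nonempty closed convex set $\mathcal C$ of linear previsions with $\underline{P}(f)=\min_{P\in\mathcal C}P(f)$ for all $f\in\mathcal H$. Since $\mathcal K$ is finite, $\mathcal M$ is a convex polytope. *)

(* Defs.v *)
From HB Require Import structures.
From mathcomp Require Import all_boot all_order all_algebra.
From mathcomp Require Import all_classical all_reals all_analysis.
Set Implicit Arguments. Unset Strict Implicit. Unset Printing Implicit Defensive.
Import Order.TTheory GRing.Theory Num.Theory numFieldNormedType.Exports.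
Local Open Scope classical_set_scope.
Local Open Scope ring_scope.

Section Imprecise.
Variables (R : realType) (T : finType).

Definition gamble := T -> R.

Definition gnorm (h : gamble) : R := Num.sqrt (\sum_(x : T) h x ^+ 2).

(* A linear prevision is represented by its probability mass vector p;
   its value on a gamble f is the expectation P(f) = \sum_x p x * f x. *)
Definition is_pmf (p : T -> R) : Prop :=
  (forall x, 0 <= p x) /\ \sum_(x : T) p x = 1.

Definition prev (p : T -> R) (f : gamble) : R := \sum_(x : T) p x * f x.

Definition convex_pset (C : set (T -> R)) : Prop :=
  forall p q t, C p -> C q -> 0 <= t <= 1 ->
    C (fun x => t * p x + (1 - t) * q x).

Definition ext_points (C : set (T -> R)) : set (T -> R) :=
  [set E | C E /\ forall p q t, C p -> C q -> 0 < t < 1 ->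
             E = (fun x => t * p x + (1 - t) * q x) -> p = q].

(* closedness of a set of mass vectors in R^T (product topology; R^T is
   metrizable, so closedness = sequential closedness under pointwise limits) *)
Definition closed_pset (C : set (T -> R)) : Prop :=
  forall (u : nat -> T -> R) (q : T -> R), (forall n, C (u n)) ->
    (forall x, (fun n => u n x) @ \oo --> q x) -> C q.

Definition is_min_prev (C : set (T -> R)) (f : gamble) (a : R) : Prop :=
  (exists2 p, C p & prev p f = a) /\ (forall p, C p -> a <= prev p f).

(* Coherence of a lower prevision LP on a set of gambles H:
   LP is the lower envelope of a nonempty closed convex set of linear previsions. *)
Definition coherent_on (H : set gamble) (LP : gamble -> R) : Prop :=
  exists C : set (T -> R),
    [/\ C !=set0, closed_pset C, convex_pset C, (forall p, C p -> is_pmf p) &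
        forall f, H f -> is_min_prev C f (LP f)].

Definition credal (K : set gamble) (LP : gamble -> R) : set (T -> R) :=
  [set p | is_pmf p /\ forall f, K f -> LP f <= prev p f].

Definition natext (M : set (T -> R)) (h : gamble) : R :=
  inf [set prev p h | p in M].

Definition Mf (M : set (T -> R)) (f : gamble) : set (T -> R) :=
  [set p | M p /\ prev p f = natext M f].

Definition Ef (M : set (T -> R)) (f : gamble) : set (T -> R) :=
  ext_points (Mf M f).

Definition normal_cone (M : set (T -> R)) (E : T -> R) : set gamble :=
  [set h | prev E h = natext M h].

Definition dE (M : set (T -> R)) (E F : T -> R) : R :=
  sup [set (prev F h - prev E h) / gnorm h
      | h in [set h | normal_cone M E h /\ h <> (fun=> 0)]].

Definition dist_lp (LP LE : gamble -> R) : R :=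
  sup [set `|LP h - LE h| | h in [set h | gnorm h = 1]].

Definition bound (K : set gamble) (M : set (T -> R)) : R :=
  sup [set inf [set sup [set dE M E F | F in Ef M f] | f in K]
      | E in ext_points M].

End Imprecise.

(* Main.v *)
Require Import Defs.
From HB Require Import structures.
From mathcomp Require Import all_boot all_order all_algebra.
From mathcomp Require Import all_classical all_reals all_analysis.
From mathcomp.algebra_tactics Require Import ring lra.
Import Order.TTheory GRing.Theory Num.Theory numFieldNormedType.Exports.
Local Open Scope classical_set_scope.
Local Open Scope ring_scope.

Section Aux0.
Variable R : realType.

Lemma inf_min (E : set R) x : E x -> (forall y, E y -> x <= y) -> inf E = x.
Proof.
move=> Ex lb; apply/eqP; rewrite eq_le; apply/andP; split.
  by apply: ge_inf => //; exists x.
by apply: lb_le_inf; [exists x|].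
Qed.

Lemma sup_le_ub (E : set R) c : 0 <= c -> (forall y, E y -> y <= c) -> sup E <= c.
Proof.
move=> c0 ub; have [->|/set0P [x Ex]] := eqVneq E set0; first by rewrite sup0.
by apply: ge_sup; [exists x|].
Qed.

Lemma inf_le_ub (E : set R) c : 0 <= c -> E !=set0 -> (forall y, E y -> y <= c) -> inf E <= c.
Proof.
move=> c0 [x Ex] ub.
have [lbE|nlb] := pselect (has_lbound E).
  by apply: le_trans (ub _ Ex); apply: ge_inf.
rewrite inf_out //; by case.
Qed.

Lemma le_sup_mem (E : set R) x c : E x -> (forall y, E y -> y <= c) -> x <= sup E.
Proof. by move=> Ex ub; apply: ub_le_sup => //; exists c. Qed.


End Aux0.

Local Notation prev := Defs.prev.
Local Notation gnorm := Defs.gnorm.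
Section Aux.
Variables (R : realType) (T : finType).

Lemma sum_cvg (v : nat -> T -> R) (l : T -> R) :
  (forall x, (fun n => v n x) @ \oo --> l x) ->
  (fun n => \sum_x v n x) @ \oo --> \sum_x l x.
Proof.
move=> h; apply: (@cvg_big R T +%R 0 xpredT _ _); last by move=> i _; exact: h.
exact: add_continuous.
Qed.

Definition phi (a b : T -> R) (p : T -> R) := \sum_x (p x * a x + p x * p x * b x).

Lemma phi_cvg a b (u : nat -> T -> R) q :
  (forall x, (fun n => u n x) @ \oo --> q x) ->
  (fun n => phi a b (u n)) @ \oo --> phi a b q.
Proof.
move=> h; apply: sum_cvg => x; apply: cvgD.
  exact: cvgMr_tmp.
apply: cvgMr_tmp; exact: cvgM.
Qed.

Lemma incr_ge {f : nat -> nat} : increasing_seq f -> forall n, (n <= f n)%N.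
Proof.
move=> fi; elim=> // n IH.
have : (f n < f n.+1)%N.
  by move/increasing_seqP : fi => /(_ n).
by move=> H; apply: leq_ltn_trans H.
Qed.

Lemma subseq_cvg (v : nat -> R) (f : nat -> nat) (l : R) : increasing_seq f ->
  v @ \oo --> l -> (v \o f) @ \oo --> l.
Proof.
move=> fi vl; apply: cvg_comp vl.
move=> P [N _ HP]; exists N => // n /= Nn; apply: HP.
rewrite /=; exact: leq_trans Nn (incr_ge fi n).
Qed.

Lemma incr_comp (f g : nat -> nat) : increasing_seq f -> increasing_seq g -> increasing_seq (f \o g).
Proof.
move=> fi gi m n /=; rewrite fi; exact: gi.
Qed.


Lemma bnd01 (v : nat -> R) : (forall n, 0 <= v n <= 1) -> bounded_fun v.
Proof.
move=> h; rewrite /bounded_near; near=> M => n _ /=.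
have /andP[h0 h1] := h n.
rewrite ger0_norm //; apply: le_trans h1 _.
near: M; exact: nbhs_pinfty_ge.
Unshelve. all: by end_near. Qed.

Lemma bw_list (u : nat -> T -> R) : (forall n x, 0 <= u n x <= 1) ->
  forall s : seq T, exists2 f : nat -> nat, increasing_seq f &
    forall x, x \in s -> cvgn (fun n => u (f n) x).
Proof.
move=> h; elim=> [|x s [f fi fc]].
  by exists id => //.
have [g gi gc] := @bolzano_weierstrass R (fun n => u (f n) x) (@bnd01 (fun n => u (f n) x) (fun n => h _ x)).
exists (f \o g); first exact: incr_comp.
move=> y; rewrite in_cons => /orP[/eqP->|ys]; first exact: gc.
have /cvg_ex[l Hl] := fc y ys.
apply/cvg_ex; exists l.
exact: (@subseq_cvg (fun n => u (f n) y) g l gi Hl).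
Qed.

Lemma bw_multi (u : nat -> T -> R) : (forall n x, 0 <= u n x <= 1) ->
  exists2 f : nat -> nat, increasing_seq f &
    forall x, (fun n => u (f n) x) @ \oo --> limn (fun n => u (f n) x).
Proof.
move=> h; have [f fi fc] := bw_list u h (enum T).
exists f => // x; apply: fc; by rewrite mem_enum.
Qed.


Lemma pmf01 (p : T -> R) : is_pmf p -> forall x, 0 <= p x <= 1.
Proof.
move=> [p0 p1] x; rewrite p0 /= -p1.
rewrite (bigD1 x) //= lerDl; apply: sumr_ge0 => y _; exact: p0.
Qed.

Lemma phi_bnd (a b p : T -> R) : is_pmf p -> phi a b p <= \sum_x (`|a x| + `|b x|).
Proof.
move=> /pmf01 h; apply: ler_sum => x _; have /andP[h0 h1] := h x.
apply: lerD.
  apply: le_trans (ler_norm _) _; rewrite normrM ger0_norm //.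
  by rewrite -[leRHS]mul1r ler_wpM2r.
apply: le_trans (ler_norm _) _; rewrite !normrM ger0_norm //.
rewrite -[leRHS]mul1r ler_wpM2r //.
by rewrite mulr_ile1.
Qed.

Lemma argmax (S : set (T -> R)) (a b : T -> R) : S !=set0 -> closed_pset S ->
  (forall p, S p -> is_pmf p) ->
  exists2 E, S E & forall p, S p -> phi a b p <= phi a b E.
Proof.
move=> [p0 Sp0] cS pS.
set V := phi a b @` S.
have ubV : has_ubound V.
  by exists (\sum_x (`|a x| + `|b x|)) => _ [p Sp <-]; exact: phi_bnd (pS _ Sp).
have supV : has_sup V by split => //; exists (phi a b p0), p0.
have : forall n : nat, exists p, S p /\ sup V - n.+1%:R^-1 < phi a b p.
  move=> n; have hn : 0 < n.+1%:R^-1 :> R by rewrite invr_gt0 ltr0Sn.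
  have [_ [p Sp <-] hp] := sup_adherent hn supV.
  by exists p.
move=> /choice [u hu].
have [f fi fc] := @bw_multi u (fun n => @pmf01 (u n) (pS _ (hu n).1)).
set q := fun x => limn (fun n => u (f n) x).
have Sq : S q by apply: (cS (u \o f)) => // n; exact: (hu (f n)).1.
have fc2 : forall x, (fun n => u (f n) x) @ \oo --> q x by move=> x; exact: fc.
have cq := @phi_cvg a b (fun n => u (f n)) q fc2.
have sq : sup V <= phi a b q.
  have cw : (fun n => phi a b (u (f n)) + harmonic n) @ \oo --> phi a b q + 0.
    by apply: cvgD => //; exact: cvg_harmonic.
  rewrite addr0 in cw; rewrite -(cvg_lim _ cw) //.
  apply: limr_ge; first by apply/cvg_ex; exists (phi a b q).
  near=> n; rewrite /= -lerBlDr.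
  apply: le_trans (ltW (hu (f n)).2).
  rewrite lerD2l lerN2 lef_pV2 ?posrE // ?ltr0Sn // ler_nat ltnS; exact: incr_ge.
exists q => // p Sp; apply: le_trans sq.
by apply: ub_le_sup => //; exists p.
Unshelve. all: by end_near. Qed.


Lemma phi_prev (g p : T -> R) : phi g 0 p = prev p g.
Proof. by rewrite /phi /prev; apply: eq_bigr => x _; rewrite mulr0 addr0. Qed.

Lemma phi_sq (p : T -> R) : phi 0 1 p = \sum_x p x * p x.
Proof. by rewrite /phi; apply: eq_bigr => x _; rewrite mulr0 add0r mulr1. Qed.

Lemma prev_cvg (u : nat -> T -> R) (q g : T -> R) :
  (forall x, (fun n => u n x) @ \oo --> q x) ->
  (fun n => prev (u n) g) @ \oo --> prev q g.
Proof.
move=> h; have := @phi_cvg g 0 u q h; rewrite phi_prev.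
by under eq_cvg do rewrite phi_prev.
Qed.

Lemma lim_ge {v : nat -> R} {l c : R} : (forall n, c <= v n) -> v @ \oo --> l -> c <= l.
Proof.
move=> h vl; rewrite -(cvg_lim _ vl) //; apply: limr_ge; first by apply/cvg_ex; exists l.
by apply: nearW.
Qed.

Lemma lim_le {v : nat -> R} {l c : R} : (forall n, v n <= c) -> v @ \oo --> l -> l <= c.
Proof.
move=> h vl; rewrite -(cvg_lim _ vl) //; apply: limr_le; first by apply/cvg_ex; exists l.
by apply: nearW.
Qed.

Lemma closed_eq (S : set (T -> R)) g m : closed_pset S ->
  closed_pset [set p | S p /\ prev p g = m].
Proof.
move=> cS u q hu hq; split; first by apply: (cS u) => // n; exact: (hu n).1.
have c := @prev_cvg u q g hq.
apply/eqP; rewrite eq_le; apply/andP; split.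
  by apply: (lim_le _ c) => n; rewrite (hu n).2.
by apply: (lim_ge _ c) => n; rewrite (hu n).2.
Qed.

Lemma prev_comb (p q : T -> R) t g :
  prev (fun x => t * p x + (1 - t) * q x) g = t * prev p g + (1 - t) * prev q g.
Proof.
rewrite /prev !mulr_sumr -big_split /=; apply: eq_bigr => x _; ring.
Qed.

Lemma ext_max (S : set (T -> R)) (g : T -> R) : S !=set0 -> closed_pset S ->
  (forall p, S p -> is_pmf p) ->
  exists E, ext_points S E /\ forall p, S p -> prev p g <= prev E g.
Proof.
move=> nS cS pS.
have [E1 SE1 mE1] := argmax _ g 0 nS cS pS.
set m := prev E1 g.
pose S1 := [set p | S p /\ prev p g = m].
have [E [SE hE] mE] : exists2 E, S1 E & forall p, S1 p -> phi 0 1 p <= phi 0 1 E.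
  apply: argmax; first by exists E1.
    exact: closed_eq.
  by move=> p [Sp _]; exact: pS.
exists E; split; last first.
  by move=> p Sp; rewrite hE /m -!phi_prev; exact: mE1.
split => // p q t Sp Sq /andP[t0 t1] Eeq.
have hp : prev p g <= m by rewrite /m -!phi_prev; exact: mE1.
have hq : prev q g <= m by rewrite /m -!phi_prev; exact: mE1.
have lin := prev_comb p q t g; rewrite -Eeq hE in lin.
have ep : prev p g = m by nra.
have eq : prev q g = m by nra.
have Qp := mE p (conj Sp ep); have Qq := mE q (conj Sq eq).
rewrite !phi_sq in Qp Qq.
pose d x := t * (p x * p x) + (1 - t) * (q x * q x) - E x * E x.
have dE x : d x = t * (1 - t) * ((p x - q x) * (p x - q x)).
  by rewrite /d Eeq; ring.
have d0 x : 0 <= d x by rewrite dE; apply: mulr_ge0; [apply: mulr_ge0; lra | rewrite -expr2; exact: sqr_ge0].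
have sd : \sum_x d x = t * (\sum_x p x * p x) + (1 - t) * (\sum_x q x * q x) - \sum_x E x * E x.
  by rewrite /d sumrB big_split /= -!mulr_sumr.
have sd0 : \sum_x d x = 0.
  apply/eqP; rewrite eq_le; apply/andP; split; last by apply: sumr_ge0 => x _; exact: d0.
  rewrite sd; nra.
apply/funext => x.
have : d x = 0 by apply: (psumr_eq0P _ sd0) => // y _; exact: d0.
rewrite dE => /eqP; rewrite !mulf_eq0 => /orP[/orP[/eqP|/eqP]|/orP[]]; try lra;
  by rewrite subr_eq0 => /eqP.
Qed.


Lemma prev_opp (p h : T -> R) : prev p (fun x => - h x) = - prev p h.
Proof. by rewrite /prev -sumrN; apply: eq_bigr => x _; rewrite mulrN. Qed.

Lemma natext_min (M : set (T -> R)) h p0 : M p0 ->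
  (forall p, M p -> prev p0 h <= prev p h) -> natext M h = prev p0 h.
Proof.
move=> Mp0 lb; apply: inf_min; first by exists p0.
by move=> _ [p Mp <-]; exact: lb.
Qed.

Lemma abs_le_gnorm (h : T -> R) x : `|h x| <= gnorm h.
Proof.
rewrite /gnorm -sqrtr_sqr ler_sqrt; last by apply: sumr_ge0 => y _; exact: sqr_ge0.
rewrite (bigD1 x) //= lerDl; apply: sumr_ge0 => y _; exact: sqr_ge0.
Qed.

Lemma gnorm_gt0 (h : T -> R) : h <> (fun=> 0) -> 0 < gnorm h.
Proof.
move=> hne; have [x hx] : exists x, h x != 0.
  apply: contrapT => nex; apply: hne; apply/funext => x.
  apply/eqP; apply: contrapT => hx; apply: nex; exists x; exact/negP.
rewrite /gnorm sqrtr_gt0; apply: lt_le_trans (_ : h x ^+ 2 <= _).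
  by rewrite exprn_even_gt0 // hx orbT.
rewrite (bigD1 x) //= lerDl; apply: sumr_ge0 => y _; exact: sqr_ge0.
Qed.

Lemma ratio_le2 (p q h : T -> R) : is_pmf p -> is_pmf q -> h <> (fun=> 0) ->
  (prev q h - prev p h) / gnorm h <= 2.
Proof.
move=> [p0 p1] [q0 q1] hne; have g0 := @gnorm_gt0 h hne.
rewrite ler_pdivrMr //.
have -> : prev q h - prev p h = \sum_x (q x - p x) * h x.
  by rewrite /prev -sumrB; apply: eq_bigr => x _; rewrite mulrBl.
have -> : 2 * gnorm h = \sum_x (q x + p x) * gnorm h.
  by rewrite -mulr_suml big_split /= q1 p1.
apply: ler_sum => x _; apply: le_trans (ler_norm _) _.
rewrite normrM; apply: ler_pM => //.
  by apply: le_trans (ler_normB _ _) _; rewrite !ger0_norm.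
exact: abs_le_gnorm.
Qed.

Lemma dE_le2 (M : set (T -> R)) E F : is_pmf E -> is_pmf F -> dE M E F <= 2.
Proof.
move=> pE pF; apply: sup_le_ub => // _ [h [_ hne] <-]; exact: ratio_le2.
Qed.


Lemma credal_closed (K : set (gamble R T)) PK : closed_pset (credal K PK).
Proof.
move=> u q hu hq; split; [split|].
- move=> x; apply: (lim_ge _ (hq x)) => n; exact: ((hu n).1.1 x).
- have c := @sum_cvg u q hq.
  apply/eqP; rewrite eq_le; apply/andP; split.
    by apply: (lim_le _ c) => n; rewrite (hu n).1.2.
  by apply: (lim_ge _ c) => n; rewrite (hu n).1.2.
- move=> f Kf; apply: (lim_ge _ (@prev_cvg u q f hq)) => n; exact: (hu n).2 f Kf.
Qed.

End Aux.

Theorem mainTheorem7 (R : realType) (T : finType)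
  (K : set (gamble R T)) (PK : gamble R T -> R) (LP : gamble R T -> R) :
  finite_set K -> K !=set0 ->
  coherent_on K PK ->
  coherent_on setT LP ->
  (forall f, K f -> LP f = PK f) ->
  dist_lp LP (natext (credal K PK)) <= bound K (credal K PK).
Proof.
move=> _ [f0 Kf0] [CK [nCK cCK _ pCK hCK]] [CL [nCL cCL _ pCL hCL]] LPK.
set M := credal K PK.
have CKM : CK `<=` M.
  by move=> p Cp; split; [exact: pCK | move=> f Kf; exact: (hCK f Kf).2 p Cp].
have CLM : CL `<=` M.
  by move=> p Cp; split; [exact: pCL | move=> f Kf; rewrite -LPK //; exact: (hCL f I).2 p Cp].
have pM : forall p, M p -> is_pmf p by move=> p [].
have nM : M !=set0 by case: nCK => p Cp; exists p; exact: CKM.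
have cM : closed_pset M by exact: credal_closed.
have natK : forall f, K f -> natext M f = PK f.
  move=> f Kf; have [[p Cp pf] _] := hCK f Kf.
  rewrite -pf; apply: natext_min; first exact: CKM.
  by move=> q Mq; rewrite pf; exact: Mq.2 f Kf.
have [x0 _] : exists x0 : T, True.
  case: nCK => p /pCK [_ p1]; case: (pickP T) => [x0 _|none]; first by exists x0.
  by move: p1; rewrite big_pred0 // => /eqP; rewrite eq_sym oner_eq0.
rewrite /dist_lp; apply: ge_sup.
  exists `|LP (fun x => (x == x0)%:R) - natext M (fun x => (x == x0)%:R)|.
  exists (fun x => (x == x0)%:R) => //.
  rewrite /= /Defs.gnorm (bigD1 x0) //= eqxx expr1n big1 ?addr0 ?sqrtr1 //.
  by move=> y /negbTE ->; rewrite expr0n.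
move=> _ [h hn <-].
have [E0 [extE0 hE0]] := @ext_max R T M (fun x => - h x) nM cM pM.
have ME0 : M E0 by case: extE0.
have hE0' : forall p, M p -> prev E0 h <= prev p h.
  by move=> p Mp; have := hE0 p Mp; rewrite !prev_opp lerN2.
have natE : natext M h = prev E0 h by exact: natext_min.
have [[q Cq qh] LPlb] := hCL h I.
have LPge : prev E0 h <= LP h by rewrite -qh; apply: hE0'; exact: CLM.
rewrite natE ger0_norm ?subr_ge0 //.
have hne : h <> (fun=> 0).
  move=> h0; move: hn; rewrite /= h0 /Defs.gnorm big1 ?sqrtr0 => [/eqP|//].
    by rewrite eq_sym oner_eq0.
  by move=> x _; rewrite expr0n.
have dE2 : forall E F, M E -> M F -> dE M E F <= 2.
  by move=> E F ME MF; apply: dE_le2; [exact: pM|exact: pM].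
have suple2 : forall E f, M E -> sup [set dE M E F | F in Ef M f] <= 2.
  move=> E f ME; apply: sup_le_ub => // _ [F [[MF _] _] <-]; exact: dE2.
apply: (@le_trans _ _ (inf [set sup [set dE M E0 F | F in Ef M f] | f in K])); last first.
  apply: (@le_sup_mem R _ _ 2); first by exists E0.
  move=> _ [E [ME _] <-]; apply: inf_le_ub => //; first by exists (sup [set dE M E F | F in Ef M f0]), f0.
  by move=> _ [f Kf <-]; exact: suple2.
apply: lb_le_inf; first by exists (sup [set dE M E0 F | F in Ef M f0]), f0.
move=> _ [f Kf <-].
have [[qf Cqf qff] _] := hCL f I.
have Mfq : Mf M f qf.
  by split; [exact: CLM | rewrite qff LPK // natK].
have [F [extF hF]] := @ext_max R T (Mf M f) h (ex_intro _ qf Mfq)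
  (@closed_eq R T M f (natext M f) cM) (fun p Mp => pM p Mp.1).
have MF : M F by case: extF => -[].
apply: (@le_trans _ _ (dE M E0 F)); last first.
  apply: (@le_sup_mem R _ _ 2); first by exists F.
  by move=> _ [G [[MG _] _] <-]; exact: dE2.
apply: (@le_trans _ _ ((prev F h - prev E0 h) / gnorm h)); last first.
  apply: (@le_sup_mem R _ _ 2).
    by exists h => //; split => //; rewrite /normal_cone /= natE.
  move=> _ [g [_ gne] <-]; exact: ratio_le2 (pM _ ME0) (pM _ MF) gne.
rewrite hn divr1 lerD2r; apply: le_trans (hF qf Mfq).
exact: LPlb.
Qed.
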